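(* Each of the following sequences $(a_n)_{n\ge0}$ has the property that, for every $n\ge0$, the polynomial $\sum_{i=0}^n a_ix^i$ has exactly $n\bmod 2$ real roots counted with multiplicity: $a_n=\binom{n+k}{k}$ for any fixed integer $k\ge 0$; the Catalan numbers $a_n=\frac{1}{n+1}\binom{2n}{n}$; $a_n=\binom{2n}{n}$; $a_n=\binom{2n+1}{n}$; $a_n=n!$; $a_n=(2n-1)!!$; $a_n=(2n)!!$.
   Context: $(2n-1)!!=1\cdot3\cdots(2n-1)$ and $(2n)!!=2\cdot4\cdots(2n)$, with both equal to $1$ for $n=0$. *)

(* Defs.v *)
From HB Require Import structures.
From mathcomp Require Import all_boot all_order all_algebra.
Set Implicit Arguments. Unset Strict Implicit. Unset Printing Implicit Defensive.
Import Order.TTheory GRing.Theory Num.Theory.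
Local Open Scope ring_scope.

Definition partial_poly (R : rcfType) (a : nat -> nat) (n : nat) : {poly R} :=
  \sum_(i < n.+1) (a i)%:R *: 'X^i.

Definition num_real_roots_mult (R : rcfType) (p : {poly R}) (k : nat) : Prop :=
  exists (s : seq R) (q : {poly R}),
    [/\ p = (\prod_(r <- s) ('X - r%:P)) * q,
        forall x : R, ~~ root q x
      & size s = k].

Definition parity_roots_property (R : rcfType) (a : nat -> nat) : Prop :=
  forall n : nat, num_real_roots_mult (partial_poly R a n) (n %% 2)%N.

Definition catalan (n : nat) : nat := ('C(n.*2, n) %/ n.+1)%N. (* exact division *)
Definition odd_dfact (n : nat) : nat := (\prod_(i < n) (2 * i + 1))%N.
Definition even_dfact (n : nat) : nat := (\prod_(i < n) (2 * i + 2))%N.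

(* Main.v *)
Require Import Defs.
From HB Require Import structures.
From mathcomp Require Import all_boot all_order all_algebra.
From mathcomp Require Import polyorder polyrcf.
From mathcomp Require Import ring lra zify.
Import Order.TTheory GRing.Theory Num.Theory.
Set Implicit Arguments. Unset Strict Implicit. Unset Printing Implicit Defensive.

Section Abs.
Local Open Scope ring_scope.
Variable R : rcfType.
Implicit Types p q : {poly R}.

Lemma sgp_right_pos p r : p != 0 -> r < 0 -> 0 < p.[0] ->
  {in `]r, 0[, forall z, ~~ root p z} -> sgp_right p r = 1.
Proof.
move=> p0 r0 pos nr.
have [y hy] := neighpr_wit r0 p0.
rewrite -(sgr_neighpr hy).
have yin : y \in `]r, 0[.
  move: hy; rewrite /neighpr in_itv /= => /andP[ry yn].
  have := next_root_in p r 0; rewrite in_itv /= => /andP[_ h].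
  rewrite in_itv /= ry /=; apply: (lt_le_trans yn); apply: (le_trans h).
  by rewrite ge_max lexx ltW.
have nr' : {in `]r, 0], forall z, ~~ root p z}.
  move=> z; rewrite in_itv /= => /andP[rz]; rewrite le_eqVlt => /orP[/eqP ->|z0].
    by rewrite rootE gt_eqF.
  by apply: nr; rewrite in_itv /= rz z0.
rewrite (@polyrN0_itv _ `]r, 0] p nr' 0 y) ?gtr0_sg //.
  by rewrite in_itv /= r0 lexx.
by move: yin; rewrite !in_itv /= => /andP[-> /ltW ->].
Qed.

Lemma largest_root p x0 : p != 0 -> x0 < 0 -> root p x0 ->
  exists r, [/\ x0 <= r, r < 0, root p r & {in `]r, 0[, forall z, ~~ root p z}].
Proof.
move=> p0 x00 rx0.
case: (prev_rootP p x0 0) => [p00|y _ py0 hy hn|c _ hc hn].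
- by rewrite p00 eqxx in p0.

- exists y; move: hy; rewrite in_itv /= => /andP[h1 h2].
  by split => //; [exact: ltW | apply/rootP].
- exists x0; split => //.
Qed.

Lemma no_root_even p : (forall x, 0 <= x -> 0 < p.[x]) ->
  (forall x, x < 0 -> root p x -> p^`().[x] < 0) -> forall x, ~~ root p x.
Proof.
move=> pos hd x; apply/negP => rx.
have p0 : p != 0 by apply/eqP => p0; move: (pos 0 (lexx _)); rewrite p0 horner0 ltxx.
have x0 : x < 0 by rewrite ltNge; apply/negP => /pos; rewrite (rootP rx) ltxx.
have [r [_ r0 rr nr]] := largest_root p0 x0 rx.
have := sgp_right_pos p0 r0 (pos 0 (lexx _)) nr.
rewrite sgp_right_deriv // sgp_rightNroot; last by rewrite rootE lt_eqF // hd.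
by rewrite ltr0_sg ?hd // => hh; lra.
Qed.

Lemma unique_root_odd p x1 : (forall x, 0 <= x -> 0 < p.[x]) -> p.[x1] < 0 ->
  (forall x, x < 0 -> root p x -> p^`().[x] = 0 -> p^`()^`().[x] < 0) ->
  (forall x y, x <= y -> y < 0 -> root p x -> root p y -> 0 < p^`().[y] ->
       0 < p^`().[x]) ->
  exists r, [/\ root p r, 0 < p^`().[r] & forall x, root p x -> x = r].
Proof.
move=> pos neg h1 h2.
have p0 : p != 0 by apply/eqP => p0; move: (pos 0 (lexx _)); rewrite p0 horner0 ltxx.
have neg0 : forall x, root p x -> x < 0.
  by move=> x rx; rewrite ltNge; apply/negP => /pos; rewrite (rootP rx) ltxx.
have x10 : x1 < 0 by rewrite ltNge; apply/negP => /pos; rewrite ltNge ltW.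
have hiv : p.[x1] <= 0 <= p.[0] by rewrite !ltW // pos.
have [x0 _ rx0] := poly_ivt (ltW x10) hiv.
have [r [_ r0 rr nr]] := largest_root p0 (neg0 _ rx0) rx0.
have sr := sgp_right_pos p0 r0 (pos 0 (lexx _)) nr.
have dr : 0 < p^`().[r].
  move: sr; rewrite sgp_right_deriv //.
  have [e|ne] := eqVneq p^`().[r] 0.
    have re : root p^`() r by apply/rootP.
    rewrite sgp_right_deriv // sgp_rightNroot; last by rewrite rootE lt_eqF // h1.
    by rewrite ltr0_sg ?h1 // => hh; lra.
  rewrite sgp_rightNroot ?rootE //.
  have [//|/ltr0_sg -> hh|] := ltrgtP 0 p^`().[r].
    lra.
  by move=> e; rewrite e eqxx in ne.
have le_r : forall x, root p x -> x <= r.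
  move=> x rx; rewrite leNgt; apply/negP => rx'.
  by move: (nr x); rewrite in_itv /= rx' neg0 // rx => /(_ isT).
have dpos : forall x, root p x -> 0 < p^`().[x].
  by move=> x rx; apply: (h2 x r) => //; exact: le_r.
exists r; split => // x rx.
apply/eqP; rewrite eq_le le_r //=.
rewrite leNgt; apply/negP => xr.
have [y [[ry xy nxy] ny]] : exists y, [/\ root p y, x < y &
     {in `]x, y[, forall z, ~~ root p z}] /\ next_root p x 0 = y.
  case: (next_rootP p x 0) => [p00|y _ py0 hy hn|c _ hc hn].
  - by rewrite p00 eqxx in p0.
  - exists y; move: hy; rewrite in_itv /= => /andP[h3 _]; split => //; split => //.
    exact/rootP.
  - by move: (hn r); rewrite in_itv /= xr r0 rr => /(_ isT).
have py : prev_root p x y = x.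
  case: (prev_rootP p x y) => [p00|y' _ py0 hy hn|c _ hc hn].
  - by rewrite p00 eqxx in p0.
  - by move: (nxy y' hy); rewrite rootE py0 eqxx.
  - by rewrite hc; apply/min_idPl; exact: ltW.
have zin : (x + y) / 2%:R \in `]x, y[ by apply: mid_in_itv.
have s1 := @sgr_neighpr R 0 p x ((x + y) / 2%:R).
rewrite /neighpr ny in s1; move: (s1 zin).
have dx := dpos x rx.
have dy := dpos y ry.

rewrite sgp_right_deriv // sgp_rightNroot; last by rewrite rootE gt_eqF.
have s2 := @sgr_neighpl R x p y ((x + y) / 2%:R).
rewrite /neighpl py in s2; rewrite (s2 zin).
have muy : \mu_y p = 1%N.
  have := mu_deriv ry; rewrite muNroot; last by rewrite rootE gt_eqF.
  have := mu_gt0 y p0; rewrite ry; case: (\mu_y p) => [|[|m]] //.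
rewrite muy sgp_right_deriv // sgp_rightNroot; last by rewrite rootE gt_eqF.
rewrite !gtr0_sg // expr1 mulr1 => hh; lra.
Qed.
End Abs.

Section Ident.
Local Open Scope ring_scope.
Variable R : rcfType.
Variables (a : nat -> nat) (A B C D : nat).
Hypothesis rec : forall n, ((C * n + C + D) * a n.+1 = (A * n + B) * a n)%N.

Local Notation PP n := (partial_poly R a n).

Lemma pp_succ n : PP n.+1 = PP n + (a n.+1)%:R *: 'X^(n.+1).
Proof. by rewrite /partial_poly big_ord_recr. Qed.

Lemma pp0 : PP 0 = (a 0)%:R%:P.
Proof. by rewrite /partial_poly big_ord1 expr0 alg_polyC. Qed.

Lemma ident n :
  'X * ((C%:R)%:P - (A%:R) *: 'X) * (PP n)^`() =
  ((B%:R) *: 'X - (D%:R)%:P) * PP n + ((D * a 0)%:R)%:P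
   - ((A * n + B) * a n)%:R *: 'X^(n.+1) :> {poly R}.
Proof.
elim: n => [|n IH].
  rewrite pp0 derivC mulr0 muln0 add0n expr1 natrM polyCM.
  rewrite -!mul_polyC natrM polyCM; ring.
rewrite pp_succ derivD mulrDr IH derivZ derivXn /=.
have e : ((A * n + B) * a n)%:R = ((C * n + C + D) * a n.+1)%:R :> R by rewrite rec.
rewrite e -!mul_polyC -mulr_natr !exprS.
ring.
Qed.

Lemma ident_eval n x : x * (C%:R - A%:R * x) * (PP n)^`().[x] =
  (B%:R * x - D%:R) * (PP n).[x] + (D * a 0)%:R - ((A * n + B) * a n)%:R * x ^+ n.+1.
Proof.
have := congr1 (fun q => q.[x]) (ident n); by rewrite /= !hornerE.
Qed.

Lemma ident2_eval n x : (PP n).[x] = 0 -> (PP n)^`().[x] = 0 ->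
  x * (C%:R - A%:R * x) * (PP n)^`()^`().[x] =
    - (((A * n + B) * a n)%:R * n.+1%:R * x ^+ n).
Proof.
move=> h0 h1.
have := congr1 (fun q => q^`().[x]) (ident n).
rewrite /= !(derivM, derivD, derivB, derivZ, derivC, derivX, derivXn, derivN) !hornerE h0 h1.
rewrite hornerMn hornerXn /= -mulr_natr.
rewrite !(mul1r, mulr0, add0r, addr0, subr0, sub0r) => ->; ring.
Qed.


Hypothesis a0 : (0 < a 0)%N.
Hypothesis A0 : (0 < A)%N.
Hypothesis B0 : (0 < B)%N.

Lemma a_pos n : (0 < a n)%N.
Proof.
elim: n => // n IH.
have : (0 < (C * n + C + D) * a n.+1)%N by rewrite rec muln_gt0 IH addn_gt0 B0 orbT.
by rewrite muln_gt0 => /andP[].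
Qed.

Lemma a_posR n : 0 < (a n)%:R :> R.
Proof. by rewrite ltr0n a_pos. Qed.

Lemma pp_horner n x : (PP n).[x] = \sum_(i < n.+1) (a i)%:R * x ^+ i.
Proof.
rewrite /partial_poly horner_sum; apply: eq_bigr => i _.
by rewrite hornerZ hornerXn.
Qed.

Lemma pp_pos n x : 0 <= x -> 0 < (PP n).[x].
Proof.
move=> x0; rewrite pp_horner big_ord_recl expr0 mulr1.
apply: (lt_le_trans (a_posR 0)); rewrite lerDl; apply: sumr_ge0 => i _.
by rewrite mulr_ge0 ?exprn_ge0 ?ler0n.
Qed.

Lemma pp_poly n : PP n = \poly_(i < n.+1) (a i)%:R.
Proof. by rewrite poly_def. Qed.

Lemma pp_size n : size (PP n) = n.+1.
Proof. by rewrite pp_poly size_poly_eq //= pnatr_eq0 -lt0n a_pos. Qed.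

Lemma pp_lead n : lead_coef (PP n) = (a n)%:R.
Proof. by rewrite pp_poly lead_coef_poly //= pnatr_eq0 -lt0n a_pos. Qed.

Lemma pp_neg n : odd n -> exists x, (PP n).[x] < 0.
Proof.
move=> on.
pose q := - (PP n \Po - 'X).
have sX : (1 < size (- 'X : {poly R}))%N by rewrite size_polyN size_polyX.
have lq : lead_coef q = (a n)%:R.
  rewrite /q lead_coefN lead_coef_comp // pp_size lead_coefN lead_coefX pp_lead /=.
  by rewrite -signr_odd on expr1 mulrN1 opprK.
have lq0 : 0 < lead_coef q by rewrite lq a_posR.
have [N HN] := poly_pinfty_gt_lc lq0.
exists (- N); have := HN N (lexx _); rewrite lq /q hornerN horner_comp hornerN hornerX.
by move=> h; rewrite -oppr_gt0 (lt_le_trans (a_posR n) h).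
Qed.

Lemma hneg (x : R) : x < 0 -> x * (C%:R - A%:R * x) < 0.
Proof.
move=> x0; rewrite nmulr_rlt0 // subr_gt0.
by apply: (lt_le_trans _ (ler0n _ C)); rewrite pmulr_rlt0 // ltr0n.
Qed.

Lemma K_pos n : 0 < ((A * n + B) * a n)%:R :> R.
Proof. by rewrite ltr0n muln_gt0 a_pos addn_gt0 B0 orbT. Qed.

Lemma gen_parity : parity_roots_property R a.
Proof.
move=> n; rewrite modn2.
case on: (odd n).
- have [x1 hx1] := pp_neg on.
  have H1 : forall x, x < 0 -> root (PP n) x -> (PP n)^`().[x] = 0 ->
      (PP n)^`()^`().[x] < 0.
    move=> x x0 /rootP h0 h1; have e := ident2_eval h0 h1.
    rewrite -(nmulr_rgt0 _ (hneg x0)) e oppr_gt0 pmulr_rlt0 ?exprn_odd_lt0 //.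
    by rewrite mulr_gt0 ?K_pos // ltr0n.
  have H2 : forall x y, x <= y -> y < 0 -> root (PP n) x -> root (PP n) y ->
      0 < (PP n)^`().[y] -> 0 < (PP n)^`().[x].
    move=> x y xy y0 /rootP rx /rootP ry dy.
    have x0 : x < 0 by apply: le_lt_trans y0.
    have ex := ident_eval n x; rewrite rx mulr0 add0r in ex.
    have ey := ident_eval n y; rewrite ry mulr0 add0r in ey.
    have : y * (C%:R - A%:R * y) * (PP n)^`().[y] < 0 by rewrite nmulr_rlt0 // hneg.
    rewrite ey => hy.
    rewrite -(nmulr_rlt0 _ (hneg x0)) ex.
    have exy : y ^+ n.+1 <= x ^+ n.+1.
      have o1 : odd n.+1 = false by rewrite oddS on.
      have ex1 : forall z : R, z ^+ n.+1 = (- z) ^+ n.+1.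
        by move=> z; rewrite exprNn -signr_odd o1 expr0 mul1r.
      rewrite (ex1 x) (ex1 y).
      by apply: lerXn2r; rewrite ?nnegrE ?oppr_ge0 ?lerN2 // ltW.
    apply: (le_lt_trans _ hy); rewrite lerD2l lerN2.
    by apply: ler_wpM2l => //; exact: ltW (K_pos n).
  have [r [rr dr ur]] := unique_root_odd (pp_pos n) hx1 H1 H2.
  have [q eq] := factor_theorem _ _ rr.
  exists [:: r], q; split => //.
  + by rewrite big_seq1 mulrC.
  + move=> x; apply/negP => rq.
    have rx : root (PP n) x by rewrite eq rootM rq.
    have xr := ur x rx; subst x.
    move: dr; rewrite eq derivM !hornerE subrr mulr0 add0r (rootP rq) mul0r.
    by rewrite ltxx.
- exists [::], (PP n); split => //; first by rewrite big_nil mul1r.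
  apply: no_root_even; first exact: pp_pos.
  move=> x x0 /rootP rx.
  have ex := ident_eval n x; rewrite rx mulr0 add0r in ex.
  rewrite -(nmulr_rgt0 _ (hneg x0)) ex.
  have o1 : odd n.+1 by rewrite oddS on.
  have h4 : ((A * n + B) * a n)%:R * x ^+ n.+1 < 0.
    by rewrite pmulr_rlt0 ?K_pos // exprn_odd_lt0.
  rewrite subr_gt0; apply: (lt_le_trans h4); exact: ler0n.
Qed.
End Ident.

Lemma rec_binom k n : ((1 * n + 1 + 0) * 'C(n.+1 + k, k) = (1 * n + k.+1) * 'C(n + k, k))%N.
Proof.
have := mul_bin_down (n.+1 + k) k.
rewrite addSn /= (_ : ((n + k).+1 - k = n.+1)%N); last by lia.
move: ('C(_, _)) ('C(_, _)) => X Y; nia.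
Qed.

Lemma rec_fact n : ((0 * n + 0 + 1) * n.+1`! = (1 * n + 1) * n`!)%N.
Proof. rewrite factS; move: (n`!) => F; nia. Qed.

Lemma rec_odd n : ((0 * n + 0 + 1) * odd_dfact n.+1 = (2 * n + 1) * odd_dfact n)%N.
Proof. rewrite /odd_dfact big_ord_recr /=; move: (\prod_(i < n) _)%N => F; nia. Qed.

Lemma rec_even n : ((0 * n + 0 + 1) * even_dfact n.+1 = (2 * n + 2) * even_dfact n)%N.
Proof. rewrite /even_dfact big_ord_recr /=; move: (\prod_(i < n) _)%N => F; nia. Qed.

Lemma rec_cb n : ((1 * n + 1 + 0) * 'C(n.+1.*2, n.+1) = (4 * n + 2) * 'C(n.*2, n))%N.
Proof.
have h1 := mul_bin_diag (n.+1.*2) n.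
have h2 := mul_bin_down (n.*2.+1) n.
rewrite doubleS /= in h1.
rewrite (_ : (n.*2.+1 - n = n.+1)%N) in h2; last by lia.
move: h1 h2; rewrite doubleS.
move: ('C(n.*2.+2, n.+1)) ('C(n.*2.+1, n)) ('C(n.*2, n)) => Z Y X; nia.
Qed.

Lemma rec_cb1 n : ((1 * n + 1 + 1) * 'C(n.+1.*2.+1, n.+1) = (4 * n + 6) * 'C(n.*2.+1, n))%N.
Proof.
have h1 := mul_bin_diag (n.+1.*2.+1) n.
have h2 := mul_bin_down (n.+1.*2) n.
rewrite doubleS /= in h1 h2.
rewrite (_ : (n.*2.+2 - n = n.+2)%N) in h2; last by lia.
rewrite doubleS.
move: h1 h2; move: ('C(n.*2.+3, n.+1)) ('C(n.*2.+2, n)) ('C(n.*2.+1, n)) => Z W X h1 h2.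
have h1' := congr1 (muln n.+2) h1.
have h2' := congr1 (muln (n.*2.+3)) h2.
apply/eqP; rewrite -(eqn_pmul2l (ltn0Sn n)); apply/eqP.
nia.
Qed.

Lemma catE n : (n.+1 * catalan n = 'C(n.*2, n))%N.
Proof.
have h := mul_bin_left (n.*2) n.
rewrite (_ : (n.*2 - n = n)%N) in h; last by lia.
have e : 'C(n.*2, n) = (n.+1 * ('C(n.*2, n) - 'C(n.*2, n.+1)))%N.
  move: h; move: ('C(n.*2, n)) ('C(n.*2, n.+1)) => X Y; nia.
by rewrite /catalan {1}e mulKn // -e.
Qed.

Lemma rec_cat n : ((1 * n + 1 + 1) * catalan n.+1 = (4 * n + 2) * catalan n)%N.
Proof.
have h1 := catE n.+1.
have h0 := catE n.
have h := rec_cb n.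
move: h h0 h1; move: (catalan n.+1) (catalan n) ('C(n.+1.*2, n.+1)) ('C(n.*2, n)) => c1 c0 Z X h h0 h1.
have h0' := congr1 (muln (4 * n + 2)) h0.
have h1' := congr1 (muln n.+1) h1.
apply/eqP; rewrite -(eqn_pmul2l (ltn0Sn n)); apply/eqP.
nia.
Qed.

Theorem mainTheorem7 (R : rcfType) :
  (forall k : nat, parity_roots_property R (fun n => 'C(n + k, k))) /\
  parity_roots_property R catalan /\
  parity_roots_property R (fun n => 'C(n.*2, n)) /\
  parity_roots_property R (fun n => 'C(n.*2.+1, n)) /\
  parity_roots_property R (fun n => n`!) /\
  parity_roots_property R odd_dfact /\
  parity_roots_property R even_dfact.
Proof.
split; first by move=> k; apply: (gen_parity R (rec_binom k)) => //; rewrite add0n binn.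
split; first by apply: (gen_parity R rec_cat).
split; first by apply: (gen_parity R rec_cb).
split; first by apply: (gen_parity R rec_cb1).
split; first by apply: (gen_parity R rec_fact) => //; rewrite fact0.
split; first by apply: (gen_parity R rec_odd) => //; rewrite /odd_dfact big_ord0.
by apply: (gen_parity R rec_even) => //; rewrite /even_dfact big_ord0.
Qed.
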